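(* Let $((h_n,\psi_n))\subset X_{2l}^{\rm conv}$ be a sequence such that $h_n$ converges to some $h\in\mathcal H_{2l}$ uniformly on compact subsets of $(0,2l)$ and $\psi_n$ converges to some $\psi\in BV(R_{2l})$ in $L^1(R_{2l})$. Then $(h,\psi)\in X_{2l}^{\rm conv}$.
   Context: Let $l>0$, $R_{2l}=(0,2l)\times(-1,1)$ with coordinates $(w_1,w_2)$. $\mathcal H_{2l}=\{h:[0,2l]\to[-1,1]\text{ convex},\ h(w_1)=h(2l-w_1)\ \forall w_1\}$. For $h\in\mathcal H_{2l}$, $SG_h=\{(w_1,w_2)\in R_{2l}:w_2<h(w_1)\}$. $X_{2l}^{\rm conv}=\{(h,\psi):h\in\mathcal H_{2l},\ \psi\in BV(R_{2l},[0,1]),\ \psi=0\text{ a.e. on }R_{2l}\setminus SG_h\}$. *)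

(* Defs.v *)
From HB Require Import structures.
From mathcomp Require Import all_boot all_order all_algebra.
From mathcomp Require Import all_classical all_reals all_analysis.
Set Implicit Arguments. Unset Strict Implicit. Unset Printing Implicit Defensive.
Import Order.TTheory GRing.Theory Num.Theory.
Import numFieldNormedType.Exports.
Local Open Scope classical_set_scope.
Local Open Scope ring_scope.

Section Defs.
Variable R : realType.

Definition leb2 := (@lebesgue_measure R \x @lebesgue_measure R)%E.

Definition Rect (l : R) : set (R * R) :=
  [set w | (0 < w.1 < 2 * l) /\ (-1 < w.2 < 1)].

Definition convex_on (a b : R) (h : R -> R) : Prop :=
  forall x y t, a <= x <= b -> a <= y <= b -> 0 <= t <= 1 ->
    h (t * x + (1 - t) * y) <= t * h x + (1 - t) * h y.

(* h in H_{2l}: h : [0,2l] -> [-1,1] convex and symmetric about l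
   (h is given on all of R; only its values on [0,2l] matter) *)
Definition H2l (l : R) (h : R -> R) : Prop :=
  [/\ convex_on 0 (2 * l) h,
      (forall x, 0 <= x <= 2 * l -> -1 <= h x <= 1) &
      (forall x, 0 <= x <= 2 * l -> h x = h (2 * l - x))].

Definition SG (l : R) (h : R -> R) : set (R * R) :=
  [set w | Rect l w /\ w.2 < h w.1].

Definition pd1 (phi : R * R -> R) (w : R * R) : R :=
  derive1 (fun t => phi (t, w.2)) w.1.
Definition pd2 (phi : R * R -> R) (w : R * R) : R :=
  derive1 (fun t => phi (w.1, t)) w.2.

Definition test_fun (l : R) (phi : R * R -> R) : Prop :=
  [/\ (forall w : R * R, derivable (fun t => phi (t, w.2)) w.1 1 /\
                         derivable (fun t => phi (w.1, t)) w.2 1),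
      continuous phi, continuous (pd1 phi), continuous (pd2 phi) &
      exists2 e : R, 0 < e & forall w : R * R,
        ~ ((e <= w.1 <= 2 * l - e) /\ (-1 + e <= w.2 <= 1 - e)) ->
        phi w = 0].

Definition total_variation (l : R) (psi : R * R -> R) : \bar R :=
  ereal_sup [set v | exists phi1 phi2 : R * R -> R,
    [/\ test_fun l phi1, test_fun l phi2,
        (forall w, phi1 w ^+ 2 + phi2 w ^+ 2 <= 1) &
        v = (\int[leb2]_(w in Rect l) (psi w * (pd1 phi1 w + pd2 phi2 w))%:E)%E]].

Definition BV (l : R) (psi : R * R -> R) : Prop :=
  leb2.-integrable (Rect l) (fun w => (psi w)%:E) /\
  (total_variation l psi < +oo)%E.

Definition Xconv (l : R) (h : R -> R) (psi : R * R -> R) : Prop :=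
  [/\ H2l l h, BV l psi,
      {ae leb2, forall w, Rect l w -> 0 <= psi w <= 1} &
      {ae leb2, forall w, Rect l w -> ~ SG l h w -> psi w = 0}].

End Defs.

(* Main.v *)
Require Import Defs.
From HB Require Import structures.
From mathcomp Require Import all_boot all_order all_algebra.
From mathcomp Require Import all_classical all_reals all_analysis.
From mathcomp Require Import measurable_realfun.
From mathcomp Require Import ring lra.
Import Order.TTheory GRing.Theory Num.Theory.
Import numFieldNormedType.Exports.
Local Open Scope classical_set_scope.
Local Open Scope ring_scope.

Lemma h_noninc (R : realType) (l : R) (h : R -> R) : 0 < l -> H2l l h ->
  forall x y, 0 <= x -> x <= y -> y <= l -> h y <= h x.
Proof.
move=> l0 [hc hb hs] x y x0 xy yl.
have [xl|xl] := eqVneq x l.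
  by have -> : y = x by apply/eqP; rewrite eq_le xy /= xl yl.
have xl' : x < l by rewrite lt_neqAle xl /= (le_trans xy yl).
pose t := (2 * l - x - y) / (2 * l - 2 * x).
have den : 0 < 2 * l - 2 * x by lra.
have t0 : 0 <= t by apply: divr_ge0; lra.
have t1 : t <= 1 by rewrite ler_pdivrMr //; lra.
have ey : y = t * x + (1 - t) * (2 * l - x).
  rewrite /t; field; lra.
have := hc x (2 * l - x) t.
rewrite -ey -hs; last lra.
have -> : t * h x + (1 - t) * h x = h x by ring.
apply; rewrite ?t0 ?t1 //; apply/andP; split; lra.
Qed.
Arguments h_noninc {R l h}.

Lemma h_nondec (R : realType) (l : R) (h : R -> R) : 0 < l -> H2l l h ->
  forall x y, l <= x -> x <= y -> y <= 2 * l -> h x <= h y.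
Proof.
move=> l0 hH x y lx xy y2.
have [_ _ hs] := hH.
rewrite hs; last lra. rewrite (hs y); last lra.
apply: (h_noninc l0 hH (2 * l - y) (2 * l - x)); lra.
Qed.
Arguments h_nondec {R l h}.

Lemma clamp_facts (R : realType) (a b x y : R) : a <= b -> x <= y ->
  [/\ a <= Num.max a (Num.min x b), Num.max a (Num.min x b) <= b &
       Num.max a (Num.min x b) <= Num.max a (Num.min y b)].
Proof.
move=> ab xy; split.
- by rewrite le_max lexx.
- by rewrite ge_max ab /= ge_min lexx orbT.
- by apply: le_max2 => //; apply: le_min2.
Qed.
Arguments clamp_facts {R a b x y}.

Lemma graph_cover (R : realType) (l : R) (h : R -> R) : 0 < l -> H2l l h ->
  exists g1 g2 : R -> R, [/\ measurable_fun setT g1, measurable_fun setT g2 &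
    forall x, 0 < x < 2 * l -> h x = g1 x \/ h x = g2 x].
Proof.
move=> l0 hH.
exists (fun x => h (Num.max 0 (Num.min x l))), (fun x => h (Num.max l (Num.min x (2 * l)))).
split.
- apply: nonincreasing_measurable => // x y xy.
  have [] := clamp_facts (ltW l0) xy.
  have [] := clamp_facts (ltW l0) (lexx y).
  move=> *; apply: (h_noninc l0 hH) => //.
- apply: nondecreasing_measurable => // x y xy.
  have l2 : l <= 2 * l by lra.
  have [] := clamp_facts l2 xy.
  have [] := clamp_facts l2 (lexx y).
  move=> *; apply: (h_nondec l0 hH) => //.
- move=> x /andP[x0 x2].
  have [xl|xl] := leP x l.
    left; congr h; rewrite ?min_l // max_r //; exact: ltW.
  right; congr h; rewrite min_l; last exact: ltW.
  by rewrite max_r //; exact: ltW.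
Qed.
Lemma core d (T : measurableType d) (R : realType) (mu : {measure set T -> \bar R})
  (D : set T) (F : T -> R) (u : nat -> \bar R) (N : nat) :
  measurable D -> measurable_fun D F -> (forall x, D x -> 0 <= F x) ->
  u @ \oo --> 0%E ->
  (forall n, (N <= n)%N -> (\int[mu]_(x in D) (F x)%:E <= u n)%E) ->
  {ae mu, forall x, D x -> F x = 0}.
Proof.
move=> mD mF F0 hu hle.
have I0 : (\int[mu]_(x in D) (F x)%:E <= 0)%E.
  apply: (cvge_to_ge hu); exists N => // n /= hn; exact: hle.
have mEF := proj2 (measurable_realfun.measurable_EFinP D F) mF.
have : (\int[mu]_(x in D) `|(EFin \o F) x| = 0)%E.
  rewrite (eq_integral (fun x => (F x)%:E)); last first.
    by move=> x /set_mem Dx /=; rewrite ger0_norm // F0.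
  apply/eqP; rewrite eq_le I0 /=; apply: integral_ge0 => x Dx.
  by rewrite lee_fin F0.
move/(ae_eq_integral_abs mu mD mEF).
apply: filterS => x + Dx => /(_ Dx) /= [->] //.
Qed.
Lemma graph_meas (R : realType) (g : R -> R) : measurable_fun setT g ->
  measurable [set w : R * R | w.2 = g w.1].
Proof.
move=> mg.
have mf : measurable_fun setT (fun w : R * R => w.2 - g w.1).
  apply: measurable_funB; first exact: measurable_snd.
  exact: (measurableT_comp mg measurable_fst).
have := mf measurableT [set 0] (measurable_set1 0).
rewrite setTI; congr measurable; apply/seteqP; split => w /=.
  by move/eqP; rewrite subr_eq0 => /eqP.
by move=> ->; rewrite subrr.
Qed.

Lemma graph_null (R : realType) (g : R -> R) :
  leb2 (R:=R) [set w : R * R | w.2 = g w.1] = 0%E.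
Proof.
rewrite /leb2 /product_measure1 /=.
rewrite (eq_integral (fun _ => 0%E)); first exact: integral0.
move=> x _ /=; rewrite (_ : xsection _ x = [set g x]) ?lebesgue_measure_set1 //.
apply/seteqP; split => y /=; rewrite /xsection /= inE //.
Qed.

Lemma Rect_meas (R : realType) (l : R) : measurable (Rect l).
Proof.
have -> : Rect l = `]0, 2 * l[ `*` `]-1, 1[.
  apply/seteqP; split => w; rewrite /Rect /= !in_itv //.
by apply: measurableX; exact: measurable_itv.
Qed.

Theorem lemma12p8 (R : realType) (l : R) (hl : 0 < l)
    (hs : nat -> R -> R) (psis : nat -> R * R -> R)
    (h : R -> R) (psi : R * R -> R) :
  (forall n, Xconv l (hs n) (psis n)) ->
  H2l l h ->
  (forall K : set R, compact K -> K `<=` `]0, 2 * l[ ->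
     forall e : R, 0 < e -> exists N : nat, forall n : nat, (N <= n)%N ->
       forall x, K x -> `|hs n x - h x| < e) ->
  BV l psi ->
  ((fun n => \int[leb2 (R:=R)]_(w in Rect l) (`|psis n w - psi w|)%:E)%E
     @ \oo --> 0%E) ->
  Xconv l h psi.
Proof.
move=> hX hH hconv hBV hL1.
have FF : Filter (almost_everywhere (leb2 (R:=R))).
  exact: (@ae_filter_ringOfSetsType _ _ _ (leb2 (R:=R))).
have FF' : Filter (nbhs (almost_everywhere (leb2 (R:=R)))) by exact: FF.
have mR := @Rect_meas R l.
have mpsi : measurable_fun (Rect l) psi.
  apply/(measurable_EFinP _ psi); exact: (measurable_int _ hBV.1).
have mpsis n : measurable_fun (Rect l) (psis n).
  have [_ hb _ _] := hX n.
  apply/(measurable_EFinP _ (psis n)); exact: (measurable_int _ hb.1).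
have mdiff n : measurable_fun (Rect l) (fun w => (`|psis n w - psi w|)%:E).
  apply/(measurable_EFinP _ (fun w => `|psis n w - psi w|)).
  have H1 := measurable_funB (mpsis n) mpsi.
  have H2 := measurableT_comp (@normr_measurable R setT) H1.
  exact: H2.
split => //.
-
  pose F := (cst 0 \max (psi \- cst 1)) \+ (cst 0 \max (\- psi)).
  have mF : measurable_fun (Rect l) F.
    apply: measurable_funD; apply: measurable_maxr => //.
      exact: measurable_funB.
    exact: measurable_funN.
  have F0 : forall w, Rect l w -> 0 <= F w.
    by move=> w _; rewrite /F /=; apply: addr_ge0; rewrite le_max lexx.
  have := @core _ _ _ (leb2 (R:=R)) (Rect l) F _ 0 mR mF F0 hL1.
  move=> H; apply: (filterS _ (H _)); last first.
    move=> n _.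
    have f10 : forall w, Rect l w -> (0 <= (F w)%:E)%E by move=> w Rw; rewrite lee_fin F0.
    have mf1 : measurable_fun (Rect l) (fun w => (F w)%:E) by apply/(measurable_EFinP _ F).
    have f20 : forall w, Rect l w -> (0 <= (`|psis n w - psi w|)%:E)%E.
      by move=> w _; rewrite lee_fin normr_ge0.
    apply: (ae_ge0_le_integral (mu := leb2 (R:=R)) mR f10 mf1 f20 (mdiff n)).
    - have [_ _ h3 _] := hX n; apply: filterS h3 => w hw Rw.
      have /andP[z0 z1] := hw Rw; rewrite lee_fin /F /=.
      have n1 := ler_norm (psis n w - psi w).
      have n2 : psi w - psis n w <= `|psis n w - psi w| by rewrite distrC ler_norm.
      have [c1|c1] := leP 0 (psi w - 1); have [c2|c2] := leP 0 (- psi w).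
      all: try lra.
  move=> w hw Rw; have := hw Rw; rewrite /F /= => e0.
  have a1 : psi w - 1 <= Num.max 0 (psi w - 1) by rewrite le_max lexx orbT.
  have a2 : - psi w <= Num.max 0 (- psi w) by rewrite le_max lexx orbT.
  have a3 : 0 <= Num.max 0 (psi w - 1) by rewrite le_max lexx.
  have a4 : 0 <= Num.max 0 (- psi w) by rewrite le_max lexx.
  apply/andP; split; lra.
have [g1 [g2 [mg1 mg2 hg]]] := @graph_cover R l h hl hH.
have G1 : {ae leb2 (R:=R), forall w : R * R, w.2 <> g1 w.1}.
  exists [set w : R * R | w.2 = g1 w.1]; split.
  - exact: graph_meas.
  - exact: graph_null.
  - by move=> w /= /contrapT.
have G2 : {ae leb2 (R:=R), forall w : R * R, w.2 <> g2 w.1}.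
  exists [set w : R * R | w.2 = g2 w.1]; split.
  - exact: graph_meas.
  - exact: graph_null.
  - by move=> w /= /contrapT.
have Hn : {ae leb2 (R:=R), forall w, forall n, Rect l w -> ~ SG l (hs n) w -> psis n w = 0}.
  apply: ae_foralln => n; by have [_ _ _ h4] := hX n.
have Hk : forall k : nat, {ae leb2 (R:=R), forall w, Rect l w ->
    (k.+1%:R)^-1 <= w.1 <= 2 * l - (k.+1%:R)^-1 ->
    h w.1 + (k.+1%:R)^-1 < w.2 -> psi w = 0}.
  move=> k; set e : R := (k.+1%:R)^-1.
  have e0 : 0 < e by rewrite /e invr_gt0 ltr0n.
  have HK : [set` `[e, 2 * l - e]] `<=` `]0, 2 * l[.
    move=> x /=; rewrite !in_itv /= => /andP[a b]; apply/andP; split; lra.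
  have [N HN] := hconv [set` `[e, 2 * l - e]] (@segment_compact R e (2 * l - e)) HK e e0.
  pose D := Rect l `&` [set w | forall n, (N <= n)%N -> psis n w = 0].
  have mD : measurable D.
    have -> : D = \bigcap_n (Rect l `&` [set w | (N <= n)%N -> psis n w = 0]).
      apply/seteqP; split => w.
        by move=> [Rw Hw] n _; split => // ?; apply: Hw.
      move=> Hw; split; first by have [] := Hw 0%N I.
      by move=> n Nn; have [_] := Hw n I; apply.
    apply: bigcapT_measurable => n; rewrite /=.
    have [Nn|Nn] := leqP N n.
      rewrite (_ : [set w | true -> psis n w = 0] = psis n @^-1` [set 0]).
        exact: (mpsis n mR _ (measurable_set1 0)).
      by apply/seteqP; split => w /=; [move=> H; exact: H | move=> ->].
    rewrite (_ : [set w | false -> psis n w = 0] = setT) ?setIT //.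
    by apply/seteqP; split.
  have DR : D `<=` Rect l by move=> w [].
  have mabs : measurable_fun D (fun w => `|psi w|).
    exact: (measurableT_comp (@normr_measurable R setT) (measurable_funS mR DR mpsi)).
  have := @core _ _ _ (leb2 (R:=R)) D (fun w => `|psi w|) _ N mD mabs
    (fun _ _ => normr_ge0 _) hL1.
  move=> H.
  have Hp : {ae leb2 (R:=R), forall w, D w -> `|psi w| = 0}.
    apply: H => n Nn.
    have -> : (\int[leb2 (R:=R)]_(w in D) (`|psi w|)%:E =
               \int[leb2 (R:=R)]_(w in D) (`|psis n w - psi w|)%:E)%E.
      apply: eq_integral => w /set_mem [_ Hw]; by rewrite Hw // sub0r normrN.
    apply: (ge0_subset_integral (leb2 (R:=R)) mD mR (mdiff n)) => //.
  apply: filterS2 Hn Hp => w Hn' Hp' Rw /andP[a b] gap.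
  have Dw : D w.
    split => // n Nn; apply: Hn' => // -[_ lt].
    have := HN n Nn w.1; rewrite /= in_itv /= a b => /(_ isT).
    rewrite ltr_norml => /andP[_ c]; lra.
  by have := Hp' Dw; move/eqP; rewrite normr_eq0 => /eqP.
have Hall := ae_foralln Hk.
apply: filterS3 G1 G2 Hall => w n1 n2 Hw Rw nSG.
have /andP[w10 w12] : 0 < w.1 < 2 * l by case: Rw.
have hne : w.2 <> h w.1.
  by case: (hg w.1 _) => [|->|->] //; rewrite w10 w12.
have hle : h w.1 < w.2.
  have [//|c] := ltP (h w.1) w.2.
  have [c'|c'] := ltP w.2 (h w.1); first by exfalso; apply: nSG; split.
  by exfalso; apply: hne; apply/eqP; rewrite eq_le c c'.
have m0 : 0 < Num.min (Num.min w.1 (2 * l - w.1)) ((w.2 - h w.1) / 2).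
  by rewrite !lt_min w10 /=; apply/andP; split; lra.
have [K _ hK] := near_infty_natSinv_lt (PosNum m0).
move: (hK K (leqnn K)); rewrite /= !lt_min => /andP[/andP[c1 c2] c3].
have c1' : (K.+1%:R^-1 : R) < w.1 := c1.
have c2' : (K.+1%:R^-1 : R) < 2 * l - w.1 := c2.
have c3' : (K.+1%:R^-1 : R) < (w.2 - h w.1) / 2 := c3.
apply: (Hw K Rw); move: c1' c2' c3'; generalize (K.+1%:R^-1 : R) => t c1' c2' c3'.
  apply/andP; split; [exact: ltW c1 | lra].
lra.
Qed.
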